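(* Let $\sigma > -2$ and $p < -1-\sigma$, and set $a = \frac{\sigma+2}{1-p} \in (0,1)$, $c_a = \big(a(1-a)\big)^{1/(p-1)}$, $u_a(x) = c_a x^a$. Then there is no positive solution $u \in C^2(0,+\infty)$ of \[ u''(x) + x^\sigma u(x)^p = 0 \quad \text{for all } x>0 \] satisfying $u(x) < u_a(x)$ for all $x>0$. In particular, for every $\alpha<0$, the local solution $u^\alpha := u_a(1+w)$ cannot be extended to a positive solution on all of $(0,+\infty)$, where $w$ is the local solution near $x=0$ of \[ x(xw')' + (2a-1)x w' + a(1-a)(p-1) w + a(1-a)\big[(1+w)^p - 1 - p w\big] = 0 \] with $\lim_{x\searrow0} w(x)/x^{\mu_+} = \alpha$, and $\mu_+>0$ is the positive root of $\mu^2 + (2a-1)\mu + a(1-a)(p-1) = 0$.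
   Context: Note $c_a^{p-1} = a(1-a)$, and $u_a$ is a positive solution of the equation. For $u = u_a(1+w)$, the equation for $u$ on $(0,T)$ is equivalent to the stated equation for $w$; a unique local solution $w\in C[0,T]\cap C^2(0,T)$ with the prescribed asymptotics $\lim_{x\searrow 0}w(x)/x^{\mu_+}=\alpha$ exists for some $T>0$. *)

(* Defs.v *)
From Stdlib Require Import Reals.
From Coquelicot Require Import Coquelicot.
Open Scope R_scope.

Definition C2_pos (u : R -> R) : Prop :=
  forall x, 0 < x ->
    ex_derive u x /\ ex_derive (Derive u) x /\ continuous (Derive (Derive u)) x.

Definition pos_sol (sigma p : R) (u : R -> R) : Prop :=
  C2_pos u /\
  (forall x, 0 < x -> 0 < u x) /\
  (forall x, 0 < x -> Derive (Derive u) x + Rpower x sigma * Rpower (u x) p = 0).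

Definition exp_a (sigma p : R) : R := (sigma + 2) / (1 - p).
Definition c_a (sigma p : R) : R :=
  let a := exp_a sigma p in Rpower (a * (1 - a)) (1 / (p - 1)).
Definition u_a (sigma p : R) (x : R) : R := c_a sigma p * Rpower x (exp_a sigma p).

(* Main.v *)
Require Import Defs.
From Stdlib Require Import Reals Lra Psatz Classical.
From Coquelicot Require Import Coquelicot.
Open Scope R_scope.


Lemma mvt (f df : R -> R) a b : a < b ->
  (forall c, a <= c <= b -> is_derive f c (df c)) ->
  exists c, f b - f a = df c * (b - a) /\ a < c < b.
Proof.
  intros Hab H. apply MVT_cor2; auto.
  intros c Hc. apply is_derive_Reals. auto.
Qed.

Lemma cont_eps (f : R -> R) df x : is_derive f x df ->
  forall eps, 0 < eps -> exists d, 0 < d /\ forall y, Rabs (y - x) < d -> Rabs (f y - f x) < eps.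
Proof.
  intros H eps He.
  assert (Hc : continuity_pt f x).
  { apply derivable_continuous_pt. exists df. apply is_derive_Reals. exact H. }
  apply continuity_pt_locally with (eps := mkposreal eps He) in Hc.
  destruct Hc as [d Hd]. exists d. split. apply cond_pos.
  intros y Hy. apply (Hd y). exact Hy.
Qed.

Lemma rp_pos x y : 0 < Rpower x y.
Proof. unfold Rpower. apply exp_pos. Qed.

Lemma rp_decr x y e : 0 < x -> x < y -> e < 0 -> Rpower y e < Rpower x e.
Proof.
  intros Hx Hxy He. unfold Rpower. apply exp_increasing.
  assert (ln x < ln y) by (apply ln_increasing; lra). nra.
Qed.

Lemma rp_decr_le x y e : 0 < x -> x <= y -> e < 0 -> Rpower y e <= Rpower x e.
Proof.
  intros Hx Hxy He. destruct (Req_dec x y). subst; lra.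
  left. apply rp_decr; lra.
Qed.

Lemma rp_split x p : 0 < x -> Rpower x p = x * Rpower x (p - 1).
Proof.
  intros Hx. replace p with (1 + (p - 1)) at 1 by ring.
  rewrite Rpower_plus, Rpower_1; auto.
Qed.

Lemma rp_inv_pow k e : 0 < k -> e <> 0 -> Rpower (Rpower k (1 / e)) e = k.
Proof.
  intros Hk He. rewrite Rpower_mult. replace (1 / e * e) with 1 by (field; auto).
  apply Rpower_1; auto.
Qed.

Lemma deriv_eq (f : R -> R) x l l' : is_derive f x l -> l = l' -> is_derive f x l'.
Proof. intros H ->. exact H. Qed.

Lemma concave_facts sigma p u : pos_sol sigma p u ->
  (forall x, 0 < x -> is_derive u x (Derive u x)) /\
  (forall x, 0 < x -> is_derive (Derive u) x (Derive (Derive u) x)) /\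
  (forall x, 0 < x -> 0 <= Derive u x) /\
  (forall x, 0 < x -> x * Derive u x <= u x).
Proof.
  intros [HC [Hpos Heq]].
  set (U1 := Derive u). set (U2 := Derive U1).
  assert (Du : forall x, 0 < x -> is_derive u x (U1 x)).
  { intros x Hx. apply Derive_correct. apply HC; auto. }
  assert (DU1 : forall x, 0 < x -> is_derive U1 x (U2 x)).
  { intros x Hx. apply Derive_correct. apply HC; auto. }
  assert (U2neg : forall x, 0 < x -> U2 x < 0).
  { intros x Hx. specialize (Heq x Hx). fold U1 U2 in Heq.
    assert (0 < Rpower x sigma * Rpower (u x) p) by (apply Rmult_lt_0_compat; apply rp_pos). lra. }
  assert (U1dec : forall s t, 0 < s -> s < t -> U1 t < U1 s).
  { intros s t Hs Hst. destruct (mvt U1 U2 s t Hst (fun z Hz => DU1 z ltac:(lra))) as [z [Hz1 Hz2]].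
    assert (U2 z < 0) by (apply U2neg; lra).
    assert (U2 z * (t - s) < 0) by (apply Rmult_neg_pos; lra). lra. }
  assert (U1nn : forall x, 0 < x -> 0 <= U1 x).
  { intros x0 Hx0. destruct (Rle_dec 0 (U1 x0)) as [|Hn]; auto. exfalso.
    set (T := x0 + u x0 / (- U1 x0) + 1).
    assert (HT : 0 <= u x0 / (- U1 x0)) by (apply Rmult_le_pos; [left; apply Hpos; auto | left; apply Rinv_0_lt_compat; lra]).
    destruct (mvt u U1 x0 T ltac:(unfold T; lra) (fun z Hz => Du z ltac:(lra))) as [z [Hz1 Hz2]].
    assert (U1 z < U1 x0) by (apply U1dec; lra).
    assert (U1 z * (T - x0) <= U1 x0 * (T - x0)) by (apply Rmult_le_compat_r; unfold T in *; lra).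
    assert (U1 x0 * (T - x0) = - u x0 + U1 x0) by (unfold T; field; lra).
    pose proof (Hpos T ltac:(unfold T; lra)). lra. }
  split; [auto|]. split; [auto|]. split; [auto|].
  intros x Hx. destruct (Rle_dec (x * U1 x) (u x)) as [|Hn]; auto. exfalso.
  assert (HU : 0 < U1 x).
  { destruct (U1nn x Hx) as [|He]; auto. rewrite <- He in Hn. pose proof (Hpos x Hx). lra. }
  set (q := (x * U1 x - u x) / (2 * U1 x)).
  assert (Hq : q * U1 x = (x * U1 x - u x) / 2) by (unfold q; field; lra).
  assert (Hq0 : 0 < q) by (unfold q; apply Rmult_lt_0_compat; [lra | apply Rinv_0_lt_compat; lra]).
  set (e := Rmin (x/2) q).
  assert (He1 : 0 < e) by (apply Rmin_glb_lt; lra).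
  assert (He2 : e <= x/2) by apply Rmin_l.
  assert (He3 : e <= q) by apply Rmin_r.
  destruct (mvt u U1 e x ltac:(lra) (fun z Hz => Du z ltac:(lra))) as [z [Hz1 Hz2]].
  assert (U1 x < U1 z) by (apply U1dec; lra).
  assert (U1 x * (x - e) <= U1 z * (x - e)) by (apply Rmult_le_compat_r; lra).
  assert (e * U1 x <= q * U1 x) by (apply Rmult_le_compat_r; lra).
  pose proof (Hpos e He1). lra.
Qed.

Definition vf a (u : R -> R) t := exp (-a*t) * u (exp t).
Definition v1f a (u : R -> R) t := exp ((1-a)*t) * Derive u (exp t) - a * vf a u t.
Definition v2f a k p (u : R -> R) t := (1-2*a) * v1f a u t + k * vf a u t - Rpower (vf a u t) p.

Lemma rp_exp y z : Rpower (exp y) z = exp (z * y).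
Proof. unfold Rpower. rewrite ln_exp. reflexivity. Qed.

Lemma transform sigma p u : -2 < sigma -> p < -1 - sigma -> pos_sol sigma p u ->
  let a := exp_a sigma p in let k := a * (1 - a) in
  (forall t, 0 < vf a u t) /\ (forall t, Rabs (v1f a u t) <= vf a u t) /\
  (forall t, is_derive (vf a u) t (v1f a u t)) /\
  (forall t, is_derive (v1f a u) t (v2f a k p u t)).
Proof.
  intros Hs Hp Hsol a k.
  pose proof (concave_facts _ _ _ Hsol) as [Du [DU1 [U1nn xU1]]].
  destruct Hsol as [_ [Hpos Heq]].
  assert (Ha : a * (1 - p) = sigma + 2) by (unfold a, exp_a; field; lra).
  assert (Ha0 : 0 < a) by (unfold a, exp_a; apply Rmult_lt_0_compat; [lra | apply Rinv_0_lt_compat; lra]).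
  assert (Ha1 : a < 1).
  { unfold a, exp_a. apply (Rmult_lt_reg_r (1 - p)). lra. field_simplify; lra. }
  assert (Dv : forall t, is_derive (vf a u) t (v1f a u t)).
  { intros t. unfold vf, v1f.
    assert (H1 : is_derive (fun t => exp (-a * t)) t (-a * exp (-a * t))) by (auto_derive; auto; ring).
    assert (H2 : is_derive (fun t => u (exp t)) t (exp t * Derive u (exp t))).
    { apply (is_derive_comp u exp t). apply Du. apply exp_pos. apply is_derive_exp. }
    eapply deriv_eq. apply (is_derive_mult _ _ t _ _ H1 H2). intros; apply Rmult_comm.
    unfold mult, plus; simpl. replace ((1 - a) * t) with (-a * t + t) by ring.
    rewrite exp_plus. unfold vf. ring. }
  split; [|split; [|split]].
  - intros t. unfold vf. apply Rmult_lt_0_compat. apply exp_pos. apply Hpos, exp_pos.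
  - intros t. unfold v1f, vf.
    pose proof (U1nn (exp t) (exp_pos t)). pose proof (xU1 (exp t) (exp_pos t)).
    replace ((1 - a) * t) with (-a * t + t) by ring. rewrite exp_plus.
    set (E := exp (-a * t)). assert (0 < E) by apply exp_pos.
    set (X := exp t) in *. set (U := Derive u X) in *. set (W := u X) in *.
    assert (0 <= E * (X * U)) by (apply Rmult_le_pos; [lra | apply Rmult_le_pos; [left; apply exp_pos | auto]]).
    assert (E * (X * U) <= E * W) by (apply Rmult_le_compat_l; lra).
    assert (0 <= E * W) by lra.
    assert (a * (E * W) <= E * W) by (rewrite <- (Rmult_1_l (E * W)) at 2; apply Rmult_le_compat_r; lra).
    apply Rabs_le. split; nra.
  - exact Dv.
  - intros t. unfold v2f.
    assert (H1 : is_derive (fun t => exp ((1 - a) * t)) t ((1 - a) * exp ((1 - a) * t))) by (auto_derive; auto; ring).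
    assert (H2 : is_derive (fun t => Derive u (exp t)) t (exp t * Derive (Derive u) (exp t))).
    { apply (is_derive_comp (Derive u) exp t). apply DU1. apply exp_pos. apply is_derive_exp. }
    pose proof (is_derive_mult _ _ t _ _ H1 H2 ltac:(intros; apply Rmult_comm)) as H3.
    pose proof (is_derive_scal (vf a u) t a _ (Dv t)) as H4.
    pose proof (is_derive_minus _ _ t _ _ H3 H4) as H5.
    eapply deriv_eq. unfold v1f. exact H5.
    unfold mult, plus, minus, opp, scal; simpl. unfold mult; simpl.
    pose proof (Heq (exp t) (exp_pos t)) as He.
    assert (Hu : u (exp t) = exp (a * t) * vf a u t).
    { unfold vf. rewrite <- Rmult_assoc, <- exp_plus. replace (a * t + - a * t) with 0 by ring. rewrite exp_0. ring. }
    assert (Hv : 0 < vf a u t) by (unfold vf; apply Rmult_lt_0_compat; [apply exp_pos | apply Hpos, exp_pos]).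
    rewrite Hu in He. rewrite <- Rpower_mult_distr in He by (try apply exp_pos; auto).
    rewrite !rp_exp in He.
    assert (Hk : exp ((1 - a) * t) * exp t * exp (sigma * t) * exp (p * (a * t)) = 1).
    { rewrite <- !exp_plus. replace ((1 - a) * t + t + sigma * t + p * (a * t)) with 0. apply exp_0. symmetry. transitivity ((2 + sigma - a * (1 - p)) * t). ring. rewrite Ha. ring. }
    unfold v1f. set (V := vf a u t) in *. set (RV := Rpower V p) in *.
    set (D2 := Derive (Derive u) (exp t)) in *.
    assert (D2 = - (exp (sigma * t) * (exp (p * (a * t)) * RV))) by lra.
    rewrite H. unfold k.
    transitivity ((1 - a) * exp ((1 - a) * t) * Derive u (exp t) -
      (exp ((1 - a) * t) * exp t * exp (sigma * t) * exp (p * (a * t))) * RV -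
      a * (exp ((1 - a) * t) * Derive u (exp t) - a * V)).
    unfold plus; simpl; ring. rewrite Hk. ring.
Qed.

Lemma core (p b k c : R) (v v1 v2 : R -> R) (t0 : R) :
  p < 1 -> 0 < c -> Rpower c (p-1) = k ->
  (forall t, 0 < v t) -> (forall t, Rabs (v1 t) <= v t) ->
  (forall t, is_derive v t (v1 t)) -> (forall t, is_derive v1 t (v2 t)) ->
  (forall t, v2 t + b * v1 t + (Rpower (v t) p - k * v t) = 0) ->
  v t0 < c -> v1 t0 < 0 -> False.
Proof.
  intros Hp Hc Hk Hv Hv1 Dv Dv1 Eq Hvt0 Hv1t0.
  assert (Hkpos : 0 < k) by (rewrite <- Hk; apply rp_pos).
  set (F := fun t => Rpower (v t) p - k * v t).
  assert (Fpos : forall t, v t < c -> 0 < F t).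
  { intros t Ht. unfold F. rewrite (rp_split (v t) p (Hv t)).
    assert (Rpower c (p-1) < Rpower (v t) (p-1)) by (apply rp_decr; auto; lra).
    specialize (Hv t). nra. }
  set (g := fun t => exp (b * t) * v1 t).
  set (dg := fun t => - exp (b * t) * F t).
  assert (Dg : forall t, is_derive g t (dg t)).
  { intros t. unfold g, dg.
    assert (H1 : is_derive (fun t => exp (b * t)) t (b * exp (b * t))).
    { auto_derive; auto; ring. }
    pose proof (is_derive_mult _ _ t _ _ H1 (Dv1 t) ltac:(intros; apply Rmult_comm)) as H2.
    eapply deriv_eq. exact H2.
    unfold mult, plus; simpl. unfold F. specialize (Eq t). nra. }
  assert (gdec : forall s t, s < t -> (forall z, s < z < t -> v z < c) -> g t < g s).
  { intros s t Hst Hz. destruct (mvt g dg s t Hst (fun z _ => Dg z)) as [z [Hz1 Hz2]].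
    assert (0 < F z) by (apply Fpos; apply Hz; lra).
    assert (0 < exp (b * z)) by apply exp_pos.
    unfold dg in Hz1. set (Fz := F z) in *. set (ez := exp (b * z)) in *. set (gt := g t) in *. set (gs := g s) in *. clearbody Fz ez gt gs. assert (0 < ez * Fz) by (apply Rmult_lt_0_compat; auto). assert (0 < ez * Fz * (t - s)) by (apply Rmult_lt_0_compat; lra). lra. }
  assert (v1neg : forall s t, s <= t -> v1 s < 0 -> (forall z, s < z < t -> v z < c) -> v1 t < 0).
  { intros s t Hst H1 Hz. destruct (Req_dec s t) as [<-|Hne]; auto.
    assert (g t < g s) by (apply gdec; auto; lra).
    unfold g in *. assert (0 < exp (b * s)) by apply exp_pos.
    assert (0 < exp (b * t)) by apply exp_pos. nra. }
  assert (vdec : forall s t, s < t -> (forall z, s < z < t -> v1 z < 0) -> v t < v s).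
  { intros s t Hst Hz. destruct (mvt v v1 s t Hst (fun z _ => Dv z)) as [z [Hz1 Hz2]].
    assert (v1 z < 0) by (apply Hz; lra). nra. }
  assert (NC : forall t, t0 <= t -> v t < c).
  { intros t1 Ht1. destruct (Rlt_dec (v t1) c) as [|Hn]; auto. exfalso.
    set (E := fun t => t0 <= t <= t1 /\ forall s, t0 <= s <= t -> v s < c).
    assert (HE0 : E t0).
    { split. lra. intros s Hs. replace s with t0 by lra. auto. }
    destruct (completeness E) as [tau [Hub Hlub]].
    { exists t1. intros x Hx. apply Hx. }
    { exists t0. auto. }
    assert (A : forall s, t0 <= s < tau -> v s < c).
    { intros s Hs. destruct (Rlt_dec (v s) c) as [|Hn2]; auto. exfalso.
      assert (tau <= s); [|lra].
      apply Hlub. intros x Hx. destruct (Rle_dec x s) as [|Hxs]; auto.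
      exfalso. apply Hn2. apply Hx. lra. }
    assert (Ht0 : t0 <= tau) by (apply Hub; auto).
    assert (Ht1' : tau <= t1) by (apply Hlub; intros x Hx; apply Hx).
    assert (Cc : v tau < c).
    { destruct (Req_dec t0 tau) as [<-|Hne]; auto.
      assert (v tau < v t0); [|lra].
      apply vdec. lra. intros z Hz. apply (v1neg t0 z). lra. auto.
      intros w Hw. apply A. lra. }
    assert (Htt : tau < t1).
    { destruct (Req_dec tau t1) as [<-|]; [lra | lra]. }
    destruct (cont_eps v (v1 tau) tau (Dv tau) (c - v tau) ltac:(lra)) as [d [Hd Hd2]].
    set (ts := tau + Rmin (d/2) ((t1 - tau)/2)).
    assert (Hm1 : 0 < Rmin (d/2) ((t1 - tau)/2)) by (apply Rmin_glb_lt; lra).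
    assert (Hm2 : Rmin (d/2) ((t1 - tau)/2) <= d/2) by apply Rmin_l.
    assert (Hm3 : Rmin (d/2) ((t1 - tau)/2) <= (t1 - tau)/2) by apply Rmin_r.
    assert (E ts).
    { unfold ts; split. lra. intros s Hs. destruct (Rlt_dec s tau). apply A; lra.
      specialize (Hd2 s). assert (Rabs (s - tau) < d) by (apply Rabs_def1; lra).
      specialize (Hd2 H). apply Rabs_def2 in Hd2. lra. }
    assert (ts <= tau) by (apply Hub; auto). unfold ts in *. lra. }
  assert (NEG : forall t, t0 <= t -> v1 t < 0).
  { intros t Ht. apply (v1neg t0 t); auto. intros z Hz; apply NC; lra. }
  assert (DEC : forall s t, t0 <= s -> s < t -> v t < v s).
  { intros s t Hs Hst. apply vdec; auto. intros z Hz. apply NEG. lra. }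
  assert (DECle : forall s t, t0 <= s -> s <= t -> v t <= v s).
  { intros s t Hs Hst. destruct (Req_dec s t) as [<-|]. lra. left; apply DEC; lra. }
  set (D := Rpower (v t0) (p-1) - k).
  assert (HD : 0 < D).
  { unfold D. rewrite <- Hk. assert (Rpower c (p-1) < Rpower (v t0) (p-1)) by (apply rp_decr; auto; lra). lra. }
  assert (FLOW : forall t, t0 <= t -> v t * D <= F t).
  { intros t Ht. unfold F, D. rewrite (rp_split (v t) p (Hv t)).
    assert (Rpower (v t0) (p-1) <= Rpower (v t) (p-1)) by (apply rp_decr_le; auto; [apply DECle; lra | lra]).
    assert (0 <= v t * (Rpower (v t) (p-1) - Rpower (v t0) (p-1))) by (apply Rmult_le_pos; [left; auto | lra]).
    lra. }
  set (Phi := fun t => v1 t + b * v t).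
  assert (DPhi : forall t, is_derive Phi t (- F t)).
  { intros t. unfold Phi. eapply deriv_eq.
    apply (is_derive_plus v1 (fun t => b * v t)). apply Dv1.
    apply (is_derive_scal v). apply Dv.
    unfold plus, scal; simpl. unfold mult; simpl. unfold F. specialize (Eq t). lra. }
  set (B := (1 + Rabs b) * v t0).
  assert (HB : forall t, t0 <= t -> Rabs (Phi t) <= B).
  { intros t Ht. unfold Phi, B. eapply Rle_trans. apply Rabs_triang.
    rewrite Rabs_mult. rewrite (Rabs_pos_eq (v t)) by (left; auto).
    specialize (Hv1 t). assert (v t <= v t0) by (apply DECle; lra).
    assert (0 <= Rabs b) by apply Rabs_pos.
    assert (Rabs b * v t <= Rabs b * v t0) by (apply Rmult_le_compat_l; auto). lra. }
  set (eta := Rpower (k + Rabs b + 1) (1 / (p - 1))).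
  assert (Heta0 : 0 < eta) by apply rp_pos.
  assert (Heta : forall x, 0 < x < eta -> k + Rabs b + 1 < Rpower x (p-1)).
  { intros x Hx. assert (Rpower eta (p-1) = k + Rabs b + 1).
    { unfold eta. apply rp_inv_pow. assert (0 <= Rabs b) by apply Rabs_pos. lra. lra. }
    rewrite <- H. apply rp_decr; lra. }
  assert (EX : exists t1, t0 <= t1 /\ v t1 < eta).
  { destruct (classic (exists t1, t0 <= t1 /\ v t1 < eta)) as [|Hn]; auto. exfalso.
    assert (Hall : forall t, t0 <= t -> eta <= v t).
    { intros t Ht. destruct (Rlt_dec (v t) eta); [|lra]. exfalso; apply Hn; exists t; auto. }
    assert (HBp : 0 <= B) by (pose proof (HB t0 (Rle_refl _)); pose proof (Rabs_pos (Phi t0)); lra).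
    assert (HeD : 0 < eta * D) by (apply Rmult_lt_0_compat; auto).
    set (T := t0 + 2 * B / (eta * D) + 1).
    assert (HT : 0 <= 2 * B / (eta * D)) by (apply Rmult_le_pos; [lra | left; apply Rinv_0_lt_compat; auto]).
    destruct (mvt Phi (fun t => - F t) t0 T ltac:(unfold T; lra) (fun z _ => DPhi z)) as [z [Hz1 Hz2]].
    assert (eta * D <= F z).
    { eapply Rle_trans; [| apply FLOW; lra]. apply Rmult_le_compat_r. lra. apply Hall; lra. }
    assert (eta * D * (T - t0) <= F z * (T - t0)) by (apply Rmult_le_compat_r; unfold T; lra).
    assert (eta * D * (T - t0) = 2 * B + eta * D) by (unfold T; field; lra).
    pose proof (HB T ltac:(unfold T; lra)). pose proof (HB t0 (Rle_refl _)).
    apply Rabs_le_between in H2. apply Rabs_le_between in H3. lra. }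
  destruct EX as [t1 [Ht1 Hvt1]].
  assert (V2neg : forall t, t1 <= t -> v2 t < 0).
  { intros t Ht. assert (Hvt : v t < eta) by (pose proof (DECle t1 t Ht1 Ht); lra).
    pose proof (Heta (v t) (conj (Hv t) Hvt)).
    specialize (Eq t). rewrite (rp_split (v t) p (Hv t)) in Eq.
    assert (- (b * v1 t) <= Rabs b * v t).
    { eapply Rle_trans. apply Rle_abs. rewrite Rabs_Ropp, Rabs_mult.
      apply Rmult_le_compat_l. apply Rabs_pos. auto. }
    assert (v t * (k + Rabs b + 1) < v t * Rpower (v t) (p - 1)) by (apply Rmult_lt_compat_l; auto).
    pose proof (Hv t). lra. }
  assert (V1dec : forall t, t1 < t -> v1 t < v1 t1).
  { intros t Ht. destruct (mvt v1 v2 t1 t Ht (fun z _ => Dv1 z)) as [z [Hz1 Hz2]].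
    assert (v2 z < 0) by (apply V2neg; lra).
    assert (v2 z * (t - t1) < 0) by (apply Rmult_neg_pos; lra) . lra. }
  assert (Hn1 : v1 t1 < 0) by (apply NEG; auto).
  set (T2 := t1 + v t1 / (- v1 t1) + 1).
  assert (HT2 : 0 <= v t1 / (- v1 t1)) by (apply Rmult_le_pos; [left; apply Hv | left; apply Rinv_0_lt_compat; lra]).
  destruct (mvt v v1 t1 T2 ltac:(unfold T2; lra) (fun z _ => Dv z)) as [z [Hz1 Hz2]].
  assert (Hz : v1 z < v1 t1) by (apply V1dec; lra).
  assert (v1 z * (T2 - t1) <= v1 t1 * (T2 - t1)) by (apply Rmult_le_compat_r; unfold T2 in *; lra).
  assert (v1 t1 * (T2 - t1) = - v t1 + v1 t1) by (unfold T2; field; lra).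
  pose proof (Hv T2). lra.
Qed.

Lemma core2 (p b k c : R) (v v1 v2 : R -> R) :
  p < 1 -> 0 < c -> Rpower c (p-1) = k ->
  (forall t, 0 < v t) -> (forall t, Rabs (v1 t) <= v t) ->
  (forall t, is_derive v t (v1 t)) -> (forall t, is_derive v1 t (v2 t)) ->
  (forall t, v2 t + b * v1 t + (Rpower (v t) p - k * v t) = 0) ->
  (forall t, v t < c) -> False.
Proof.
  intros Hp Hc Hk Hv Hv1 Dv Dv1 Eq Hvc.
  destruct (classic (exists t0, v1 t0 <> 0)) as [[t0 Ht0]|Hn].
  - destruct (Rlt_dec (v1 t0) 0) as [Hl|Hl].
    + exact (core p b k c v v1 v2 t0 Hp Hc Hk Hv Hv1 Dv Dv1 Eq (Hvc t0) Hl).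
    + apply (core p (-b) k c (fun t => v (-t)) (fun t => - v1 (-t)) (fun t => v2 (-t)) (-t0)); auto.
      * intros t. rewrite Rabs_Ropp. auto.
      * intros t. eapply deriv_eq. apply (is_derive_comp v (fun t => -t) t).
        apply Dv. auto_derive; auto. unfold scal; simpl; unfold mult; simpl. ring.
      * intros t. eapply deriv_eq. apply (is_derive_opp (fun t => v1 (-t))).
        apply (is_derive_comp v1 (fun t => -t) t).
        apply Dv1. auto_derive; auto. unfold opp, scal; simpl; unfold mult; simpl. ring.
      * intros t. specialize (Eq (-t)). lra.
      * rewrite Ropp_involutive. lra.
  - assert (Hz : forall t, v1 t = 0).
    { intros t. destruct (Req_dec (v1 t) 0); auto. exfalso; apply Hn; exists t; auto. }
    set (t := 0).
    assert (H0 : is_derive v1 t 0).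
    { apply (is_derive_ext (fun _ => 0) v1). intros; rewrite Hz; auto. apply (is_derive_const 0). }
    assert (v2 t = 0).
    { rewrite <- (is_derive_unique _ _ _ (Dv1 t)). apply is_derive_unique; auto. }
    specialize (Eq t). rewrite H, Hz in Eq.
    rewrite (rp_split (v t) p (Hv t)) in Eq.
    assert (Hkpos : 0 < k) by (rewrite <- Hk; apply rp_pos).
    assert (Rpower c (p-1) < Rpower (v t) (p-1)) by (apply rp_decr; auto; lra).
    assert (v t * k < v t * Rpower (v t) (p-1)) by (apply Rmult_lt_compat_l; auto; lra).
    lra.
Qed.

Lemma lim_unpack (f : R -> R) l : filterlim f (at_right 0) (locally l) ->
  forall eps, 0 < eps -> exists d, 0 < d /\ forall x, 0 < x < d -> Rabs (f x - l) < eps.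
Proof.
  intros H eps He. apply filterlim_locally with (eps := mkposreal eps He) in H.
  destruct H as [d Hd]. exists d. split. apply cond_pos.
  intros x Hx. apply (Hd x). unfold ball; simpl. unfold AbsRing_ball, abs, minus, plus, opp; simpl.
  rewrite Ropp_0, Rplus_0_r. rewrite Rabs_pos_eq; lra. lra.
Qed.

Lemma facts sigma p : -2 < sigma -> p < -1 - sigma ->
  let a := exp_a sigma p in
  0 < a /\ a < 1 /\ p < 1 /\ 0 < c_a sigma p /\ Rpower (c_a sigma p) (p - 1) = a * (1 - a) /\
  (forall t, u_a sigma p (exp t) = c_a sigma p * exp (a * t)).
Proof.
  intros Hs Hp a.
  assert (Ha0 : 0 < a) by (unfold a, exp_a; apply Rmult_lt_0_compat; [lra | apply Rinv_0_lt_compat; lra]).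
  assert (Ha1 : a < 1).
  { unfold a, exp_a. apply (Rmult_lt_reg_r (1 - p)). lra. field_simplify; lra. }
  repeat split; auto; try lra.
  - unfold c_a. apply rp_pos.
  - unfold c_a. fold a. apply rp_inv_pow. nra. lra.
  - intros t. unfold u_a. fold a. rewrite rp_exp. f_equal; try ring.
Qed.

Theorem theorem5p11 (sigma p : R) (Hsigma : -2 < sigma) (Hp : p < -1 - sigma) :
  (~ exists u : R -> R,
       pos_sol sigma p u /\ (forall x, 0 < x -> u x < u_a sigma p x)) /\
  (forall (alpha mu : R), alpha < 0 -> 0 < mu ->
     let a := exp_a sigma p in
     mu ^ 2 + (2 * a - 1) * mu + a * (1 - a) * (p - 1) = 0 ->
     ~ exists u : R -> R,
         pos_sol sigma p u /\
         filterlim (fun x => (u x / u_a sigma p x - 1) / Rpower x mu)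
                   (at_right 0) (locally alpha)).
Proof.
  pose proof (facts sigma p Hsigma Hp) as [Ha0 [Ha1 [Hp1 [Hc [Hck Hua]]]]].
  set (a := exp_a sigma p) in *. set (c := c_a sigma p) in *. set (k := a * (1 - a)) in *.
  assert (Gen : forall u, pos_sol sigma p u ->
     (forall t, 0 < vf a u t) /\ (forall t, Rabs (v1f a u t) <= vf a u t) /\
     (forall t, is_derive (vf a u) t (v1f a u t)) /\
     (forall t, is_derive (v1f a u) t (v2f a k p u t)) /\
     (forall t, v2f a k p u t + (2 * a - 1) * v1f a u t + (Rpower (vf a u t) p - k * vf a u t) = 0) /\
     (forall t, vf a u t = u (exp t) / u_a sigma p (exp t) * c)).
  { intros u Hsol. pose proof (transform sigma p u Hsigma Hp Hsol) as [H1 [H2 [H3 H4]]].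
    fold a in H1, H2, H3, H4. fold k in H4.
    split; [auto|split;[auto|split;[auto|split;[auto|split]]]].
    - intros t. unfold v2f. ring.
    - intros t. rewrite Hua. unfold vf.
      replace (- a * t) with (- (a * t)) by ring. rewrite exp_Ropp.
      field. split; apply Rgt_not_eq; [apply exp_pos | auto]. }
  split.
  - intros [u [Hsol Hlt]].
    destruct (Gen u Hsol) as [H1 [H2 [H3 [H4 [H5 H6]]]]].
    apply (core2 p (2 * a - 1) k c (vf a u) (v1f a u) (v2f a k p u)); auto.
    intros t. rewrite H6. specialize (Hlt (exp t) (exp_pos t)).
    assert (0 < u_a sigma p (exp t)) by (rewrite Hua; apply Rmult_lt_0_compat; [auto | apply exp_pos]).
    assert (u (exp t) / u_a sigma p (exp t) < 1).
    { apply (Rmult_lt_reg_r (u_a sigma p (exp t))); auto. field_simplify; lra. }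
    nra.
  - intros alpha mu Halpha Hmu a' Hq [u [Hsol Hlim]].
    destruct (Gen u Hsol) as [H1 [H2 [H3 [H4 [H5 H6]]]]].
    destruct (lim_unpack _ _ Hlim (- alpha / 2) ltac:(lra)) as [d [Hd Hdl]].
    set (v := vf a u) in *.
    assert (Hr : forall t, t < ln d ->
       c + 3 * alpha / 2 * c * exp (mu * t) < v t /\ v t < c).
    { intros t Ht. assert (Hx : 0 < exp t < d).
      { split. apply exp_pos. rewrite <- (exp_ln d Hd). apply exp_increasing; auto. }
      specialize (Hdl _ Hx). rewrite rp_exp in Hdl.
      
      set (E := exp (mu * t)) in *. assert (HE : 0 < E) by apply exp_pos.
      set (q := u (exp t) / u_a sigma p (exp t)) in *.
      assert (Hvq : v t = q * c) by (unfold v; rewrite H6; reflexivity).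
      apply Rabs_def2 in Hdl. destruct Hdl as [Hl1 Hl2].
      assert (Hq1 : (q - 1) < alpha / 2 * E).
      { apply (Rmult_lt_reg_r (/ E)). apply Rinv_0_lt_compat; auto.
        replace (alpha / 2 * E * / E) with (alpha / 2) by (field; lra). unfold Rdiv in Hl1. lra. }
      assert (Hq2 : 3 * alpha / 2 * E < q - 1).
      { apply (Rmult_lt_reg_r (/ E)). apply Rinv_0_lt_compat; auto.
        replace (3 * alpha / 2 * E * / E) with (3 * alpha / 2) by (field; lra). unfold Rdiv in Hl2. lra. }
      assert (alpha / 2 * E < 0) by (assert (0 < - alpha / 2 * E) by (apply Rmult_lt_0_compat; lra); lra).
      rewrite Hvq. split.
      + assert (3 * alpha / 2 * E * c < (q - 1) * c) by (apply Rmult_lt_compat_r; auto). nra.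
      + assert ((q - 1) * c < 0 * c) by (apply Rmult_lt_compat_r; lra). lra. }
    set (s0 := ln d - 1).
    destruct (Hr s0 ltac:(unfold s0; lra)) as [_ Hs0].
    set (theta := (c - v s0) / (c * (- 3 * alpha / 2))).
    assert (Htheta : 0 < theta).
    { unfold theta. apply Rmult_lt_0_compat. lra. apply Rinv_0_lt_compat. apply Rmult_lt_0_compat; lra. }
    set (sa := Rmin (s0 - 1) (ln theta / mu)).
    assert (Hsa1 : sa <= s0 - 1) by apply Rmin_l.
    assert (Hsa2 : sa <= ln theta / mu) by apply Rmin_r.
    assert (HEt : exp (mu * sa) <= theta).
    { rewrite <- (exp_ln theta Htheta). destruct (Req_dec (mu * sa) (ln theta)) as [->|]; [lra|].
      left. apply exp_increasing.
      assert (Hms : mu * sa <= mu * (ln theta / mu)) by (apply Rmult_le_compat_l; lra).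
      replace (mu * (ln theta / mu)) with (ln theta) in Hms by (field; lra). lra. }
    destruct (Hr sa ltac:(unfold s0 in *; lra)) as [Hsa _].
    assert (Hct : c * (- 3 * alpha / 2) * theta = c - v s0) by (unfold theta; field; nra).
    assert (c * (- 3 * alpha / 2) * exp (mu * sa) <= c * (- 3 * alpha / 2) * theta).
    { apply Rmult_le_compat_l; auto. assert (0 < c * (- 3 * alpha / 2)) by (apply Rmult_lt_0_compat; lra). lra. }
    assert (Hvv : v s0 < v sa) by lra.
    destruct (mvt v (v1f a u) sa s0 ltac:(lra) (fun z _ => H3 z)) as [z [Hz1 Hz2]].
    assert (Hz : v1f a u z < 0).
    { destruct (Rlt_dec (v1f a u z) 0) as [|Hn]; auto. exfalso.
      assert (0 <= v1f a u z * (s0 - sa)) by (apply Rmult_le_pos; lra). lra. }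
    destruct (Hr z ltac:(unfold s0 in *; lra)) as [_ Hzc].
    exact (core p (2 * a - 1) k c v (v1f a u) (v2f a k p u) z Hp1 Hc Hck H1 H2 H3 H4 H5 Hzc Hz).
Qed.
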